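(* Let $X$ be a $k$-regular distance regular graph of diameter $d$, and let $Y_i$ be the $i$-th distance digraph of $\mathrm{LD}(X)$. Then: (i) the matrices $S(Y_0),S(Y_1),\dots,S(Y_{d+1})$ are linearly dependent; (ii) for all $i,j\in\{0,1,\dots,d+1\}$, $S(Y_i)S(Y_j)=S(Y_j)S(Y_i)$.
   Context: $X$ is a connected distance regular graph (for vertices $u,v$ at distance $\ell$, the number of vertices at distance $i$ from $u$ and $j$ from $v$ depends only on $i,j,\ell$). Each edge $\{a,b\}$ of $X$ is replaced by arcs $(a,b)$ and $(b,a)$; the line digraph $\mathrm{LD}(X)$ has the arcs as vertices, with an arc from $(a,b)$ to $(c,d)$ iff $b=c$. For a digraph $Y$, its $i$-th distance digraph $Y_i$ has the same vertex set, with $a$ adjacent to $b$ iff the directed distance from $a$ to $b$ in $Y$ is $i$. For a digraph $Z$ with $01$-adjacency matrix $A(Z)$, its skew-adjacency matrix is $S(Z)=A(Z)-A(Z)^T$. *)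

(* Defs.v *)
From HB Require Import structures.
From mathcomp Require Import all_boot all_order all_algebra.
Set Implicit Arguments. Unset Strict Implicit. Unset Printing Implicit Defensive.
Import GRing.Theory Num.Theory.
Local Open Scope ring_scope.

Fixpoint walkn (V : finType) (r : rel V) (n : nat) (x y : V) : bool :=
  match n with
  | 0 => x == y
  | n'.+1 => [exists z, r x z && walkn r n' z y]
  end.

Definition dist_is (V : finType) (r : rel V) (i : nat) (x y : V) : bool :=
  walkn r i x y && [forall j : 'I_i, ~~ walkn r j x y].

Definition simple_graph (T : finType) (e : rel T) : Prop :=
  symmetric e /\ irreflexive e.

Definition connected_graph (T : finType) (e : rel T) : Prop :=
  forall u v, exists n, walkn e n u v.

Definition regular_graph (T : finType) (e : rel T) (k : nat) : Prop :=
  forall v, #|[set w | e v w]| = k.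

Definition diameter_is (T : finType) (e : rel T) (d : nat) : Prop :=
  (exists u v, dist_is e d u v) /\
  (forall u v, exists2 i, (i <= d)%N & dist_is e i u v).

Definition distance_regular (T : finType) (e : rel T) : Prop :=
  simple_graph e /\ connected_graph e /\
  forall (l i j : nat) (u v u' v' : T),
    dist_is e l u v -> dist_is e l u' v' ->
    #|[set w | dist_is e i u w && dist_is e j v w]| =
    #|[set w | dist_is e i u' w && dist_is e j v' w]|.

Definition arc (T : finType) (e : rel T) := {x : T * T | e x.1 x.2}.

Definition line_digraph (T : finType) (e : rel T) : rel (arc e) :=
  fun p q => (val p).2 == (val q).1.

Definition distance_digraph (V : finType) (r : rel V) (i : nat) : rel V :=
  fun x y => dist_is r i x y.

Definition adjacency_mx (R : numFieldType) (V : finType) (r : rel V) : 'M[R]_#|V| :=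
  \matrix_(p, q) (r (enum_val p) (enum_val q))%:R.

Definition skew_adjacency_mx (R : numFieldType) (V : finType) (r : rel V) : 'M[R]_#|V| :=
  adjacency_mx R r - (adjacency_mx R r)^T.

(* Main.v *)
Require Import Defs.
From HB Require Import structures.
From mathcomp Require Import all_boot all_order all_algebra.
Import GRing.Theory Num.Theory.
Set Implicit Arguments. Unset Strict Implicit.
Local Open Scope ring_scope.

Lemma sum_enum (R : numFieldType) (V : finType) (F : V -> R) :
  \sum_(i < #|V|) F (enum_val i) = \sum_v F v.
Proof. by rewrite -(big_enum_val F). Qed.

Definition mxf (R : numFieldType) (V W : finType) (f : V -> W -> R) : 'M[R]_(#|V|, #|W|) :=
  \matrix_(p, q) f (enum_val p) (enum_val q).

Lemma mxf_mul (R : numFieldType) (U V W : finType) (f : U -> V -> R) (g : V -> W -> R) :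
  mxf f *m mxf g = mxf (fun x z => \sum_y f x y * g y z).
Proof.
apply/matrixP => p q; rewrite !mxE.
rewrite -(sum_enum (fun y => f (enum_val p) y * g y (enum_val q))).
by apply: eq_bigr => i _; rewrite !mxE.
Qed.

Lemma mxf_tr (R : numFieldType) (V W : finType) (f : V -> W -> R) :
  (mxf f)^T = mxf (fun y x => f x y).
Proof. by apply/matrixP => p q; rewrite !mxE. Qed.

Lemma mxf_eq (R : numFieldType) (V W : finType) (f g : V -> W -> R) :
  f =2 g -> mxf f = mxf g.
Proof. by move=> H; apply/matrixP => p q; rewrite !mxE H. Qed.

Lemma mxf_scalar (R : numFieldType) (V : finType) (a : R) :
  a%:M = mxf (fun u v : V => a *+ (u == v)).
Proof. by apply/matrixP => p q; rewrite !mxE (inj_eq enum_val_inj). Qed.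

Lemma sum_card (R : numFieldType) (V : finType) (b : pred V) :
  \sum_x ((b x)%:R : R) = #|[set x | b x]|%:R.
Proof.
rewrite -sum1_card natr_sum [RHS]big_mkcond; apply: eq_bigr => x _.
by rewrite inE; case: (b x).
Qed.

Lemma sum_delta (R : numFieldType) (V : finType) (a : V) (F : V -> R) :
  \sum_v ((a == v)%:R * F v) = F a.
Proof.
rewrite (bigD1 a) //= eqxx mul1r big1 ?addr0 // => v /negbTE.
by rewrite eq_sym => ->; rewrite mul0r.
Qed.

Lemma distP (V : finType) (r : rel V) i x y :
  reflect (walkn r i x y /\ forall j, (j < i)%N -> ~~ walkn r j x y) (dist_is r i x y).
Proof.
apply: (iffP andP) => [[H1 /forallP H2]|[H1 H2]]; split => //.
  by move=> j lt; exact: (H2 (Ordinal lt)).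
by apply/forallP => j; apply: H2.
Qed.

Lemma walkS (V : finType) (r : rel V) n x y :
  walkn r n.+1 x y = [exists z, r x z && walkn r n z y].
Proof. by []. Qed.

Lemma walkSr (V : finType) (r : rel V) n x y :
  walkn r n.+1 x y = [exists z, walkn r n x z && r z y].
Proof.
elim: n x => [|n IH] x.
  apply/existsP/existsP => [[z /andP[H /eqP <-]]|[z /andP[/eqP <- H]]].
    by exists x; rewrite /= eqxx.
  by exists y; rewrite H eqxx.
rewrite walkS.
apply/existsP/existsP => [[z /andP[H1 H2]]|[w /andP[/existsP[z /andP[H1 H2]] H3]]].
  move: H2; rewrite IH => /existsP[w /andP[H2 H3]].
  by exists w; rewrite H3 andbT; apply/existsP; exists z; rewrite H1.
by exists z; rewrite H1 IH; apply/existsP; exists w; apply/andP; split.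
Qed.

Lemma walk_sym (V : finType) (r : rel V) n x y : symmetric r ->
  walkn r n x y = walkn r n y x.
Proof.
move=> sr; elim: n x y => [|n IH] x y; first by rewrite /= eq_sym.
rewrite walkSr walkS; apply/existsP/existsP => [[z /andP[H1 H2]]|[z /andP[H1 H2]]];
  exists z; apply/andP; split.
- by rewrite sr.
- by rewrite IH.
- by rewrite IH.
- by rewrite sr.
Qed.

Lemma dist_sym (V : finType) (r : rel V) i x y : symmetric r ->
  dist_is r i x y = dist_is r i y x.
Proof.
move=> sr; apply/distP/distP => [][H1 H2]; split.
- by rewrite walk_sym.
- by move=> j lt; rewrite walk_sym //; apply: H2.
- by rewrite walk_sym.
- by move=> j lt; rewrite walk_sym //; apply: H2.
Qed.

Lemma dist0 (V : finType) (r : rel V) x y : dist_is r 0 x y = (x == y).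
Proof. apply/distP/idP => [[H _] //|H]; by split. Qed.

Lemma dist1 (V : finType) (r : rel V) x y : irreflexive r -> dist_is r 1 x y = r x y.
Proof.
move=> ir; apply/distP/idP => [[H _]|H].
  by move: H => /existsP[z /andP[H /eqP <-]].
split; first by apply/existsP; exists y; rewrite H eqxx.
case=> //= _; apply/negP => /eqP E; by rewrite E ir in H.
Qed.
Lemma walkLD (T : finType) (e : rel T) n (p q : Defs.arc e) :
  walkn (@line_digraph T e) n.+1 p q = walkn e n (val p).2 (val q).1.
Proof.
elim: n p => [|n IH] p.
  rewrite walkS /=; apply/existsP/idP => [[z /andP[H /eqP <-]]|H].
    exact: H.
  by exists q; rewrite /line_digraph H eqxx.
rewrite walkS [RHS]walkS; apply/existsP/existsP => [[z /andP[H1 H2]]|[y /andP[H1 H2]]].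
  exists (val z).2; rewrite -IH H2 andbT.
  by move/eqP: H1 => ->; case: z {H2} => [[a b] /= H].
exists (exist _ ((val p).2, y) H1); rewrite IH /line_digraph /=.
by rewrite eqxx.
Qed.

Lemma distLD (T : finType) (e : rel T) i (p q : Defs.arc e) :
  dist_is (@line_digraph T e) i.+1 p q = dist_is e i (val p).2 (val q).1 && (p != q).
Proof.
apply/distP/andP => [[H1 H2]|[/distP[H1 H2] H3]].
  split; last by have := H2 0%N isT.
  apply/distP; split; first by rewrite -walkLD.
  by move=> j lt; rewrite -walkLD; apply: H2.
split; first by rewrite walkLD.
case=> [_|j lt]; first by [].
by rewrite walkLD; apply: H2.
Qed.
Lemma count_arc (R : numFieldType) (T : finType) (e : rel T) u v :
  \sum_(p : Defs.arc e) ((((val p).1 == u)%:R : R) * ((val p).2 == v)%:R) = (e u v)%:R.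
Proof.
under eq_bigr => p _ do rewrite -natrM mulnb -xpair_eqE -surjective_pairing.
case euv: (e u v).
  rewrite (bigD1 (exist _ (u, v) euv)) //= eqxx big1 ?addr0 // => p.
  by rewrite -val_eqE /= => /negbTE ->.
rewrite big1 // => p _; case: eqP => // E.
by have := valP p; rewrite E /= euv.
Qed.

Lemma card_tail (T : finType) (e : rel T) u :
  #|[set p : Defs.arc e | (val p).1 == u]| = #|[set w | e u w]|.
Proof.
have -> : [set w | e u w] = (fun p : Defs.arc e => (val p).2) @: [set p : Defs.arc e | (val p).1 == u].
  apply/setP => w; rewrite inE; apply/idP/imsetP => [H|[p]].
    by exists (exist _ (u, w) H); rewrite // inE.
  by rewrite inE => /eqP <- ->; apply: (valP p).
apply/esym; apply: card_in_imset => p q; rewrite !inE => /eqP Hp /eqP Hq E.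
apply: val_inj; rewrite [val p]surjective_pairing [val q]surjective_pairing.
by rewrite Hp Hq E.
Qed.

Lemma card_head (T : finType) (e : rel T) u : symmetric e ->
  #|[set p : Defs.arc e | (val p).2 == u]| = #|[set w | e u w]|.
Proof.
move=> se.
have -> : [set w | e u w] = (fun p : Defs.arc e => (val p).1) @: [set p : Defs.arc e | (val p).2 == u].
  apply/setP => w; rewrite inE; apply/idP/imsetP => [H|[p]].
    by exists (exist _ (w, u) (etrans (esym (se u w)) H)); rewrite // inE.
  by rewrite inE => /eqP <- ->; rewrite se; apply: (valP p).
apply/esym; apply: card_in_imset => p q; rewrite !inE => /eqP Hp /eqP Hq E.
apply: val_inj; rewrite [val p]surjective_pairing [val q]surjective_pairing.
by rewrite Hp Hq E.
Qed.
Definition Hf (R : numFieldType) (T : finType) (e : rel T) (p : Defs.arc e) (v : T) : R :=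
  ((val p).2 == v)%:R.
Definition Tf (R : numFieldType) (T : finType) (e : rel T) (p : Defs.arc e) (v : T) : R :=
  ((val p).1 == v)%:R.
Definition Df (R : numFieldType) (T : finType) (e : rel T) i (u v : T) : R :=
  (dist_is e i u v)%:R.
Definition Pf (R : numFieldType) (T : finType) (e : rel T) i (p q : Defs.arc e) : R :=
  (dist_is e i (val p).2 (val q).1)%:R.

Arguments Hf R {T} e p v.
Arguments Tf R {T} e p v.
Arguments Df R {T} e i u v.
Arguments Pf R {T} e i p q.

Lemma S_succ (R : numFieldType) (T : finType) (e : rel T) i :
  skew_adjacency_mx R (distance_digraph (@line_digraph T e) i.+1) =
  mxf (Pf R e i) - (mxf (Pf R e i))^T.
Proof.
apply/matrixP => p q; rewrite !mxE /distance_digraph !distLD /Pf.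
case: (eqVneq (enum_val p) (enum_val q)) => [->|ne].
  by rewrite !subrr.
by rewrite !andbT.
Qed.

Lemma P_fact (R : numFieldType) (T : finType) (e : rel T) i :
  mxf (Pf R e i) = mxf (Hf R e) *m mxf (Df R e i) *m (mxf (Tf R e))^T.
Proof.
rewrite mxf_tr !mxf_mul; apply: mxf_eq => p q /=.
under eq_bigr => y _ do rewrite /Hf sum_delta mulrC /Tf.
by rewrite sum_delta.
Qed.

Lemma Pt_fact (R : numFieldType) (T : finType) (e : rel T) i : symmetric e ->
  (mxf (Pf R e i))^T = mxf (Tf R e) *m mxf (Df R e i) *m (mxf (Hf R e))^T.
Proof.
move=> se; rewrite !mxf_tr !mxf_mul; apply: mxf_eq => p q /=.
under eq_bigr => y _ do rewrite /Tf sum_delta mulrC /Hf.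
by rewrite sum_delta /Df /Pf dist_sym.
Qed.

Lemma TH (R : numFieldType) (T : finType) (e : rel T) : simple_graph e ->
  (mxf (Tf R e))^T *m mxf (Hf R e) = mxf (Df R e 1).
Proof.
case=> se ie; rewrite mxf_tr mxf_mul; apply: mxf_eq => u v /=.
by rewrite /Df dist1 // -count_arc.
Qed.

Lemma HT (R : numFieldType) (T : finType) (e : rel T) : simple_graph e ->
  (mxf (Hf R e))^T *m mxf (Tf R e) = mxf (Df R e 1).
Proof.
case=> se ie; rewrite mxf_tr mxf_mul; apply: mxf_eq => u v /=.
rewrite /Df dist1 // se -count_arc; apply: eq_bigr => p _.
by rewrite mulrC.
Qed.

Lemma TT (R : numFieldType) (T : finType) (e : rel T) k : regular_graph e k ->
  (mxf (Tf R e))^T *m mxf (Tf R e) = (k%:R)%:M.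
Proof.
move=> rg; rewrite mxf_tr mxf_mul mxf_scalar; apply: mxf_eq => u v /=.
case: (eqVneq u v) => [<-|ne].
  under eq_bigr => p _ do rewrite /Tf -natrM mulnb andbb.
  by rewrite sum_card card_tail rg.
rewrite big1 // => p _; rewrite /Tf; case: eqP => [E|]; last by rewrite mul0r.
by rewrite E (negbTE ne) mulr0.
Qed.

Lemma HH (R : numFieldType) (T : finType) (e : rel T) k : simple_graph e -> regular_graph e k ->
  (mxf (Hf R e))^T *m mxf (Hf R e) = (k%:R)%:M.
Proof.
move=> [se _] rg; rewrite mxf_tr mxf_mul mxf_scalar; apply: mxf_eq => u v /=.
case: (eqVneq u v) => [<-|ne].
  under eq_bigr => p _ do rewrite /Hf -natrM mulnb andbb.
  by rewrite sum_card card_head // rg.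
rewrite big1 // => p _; rewrite /Hf; case: eqP => [E|]; last by rewrite mul0r.
by rewrite E (negbTE ne) mulr0.
Qed.
Lemma Dcomm (R : numFieldType) (T : finType) (e : rel T) d i j :
  distance_regular e -> diameter_is e d ->
  mxf (Df R e i) *m mxf (Df R e j) = mxf (Df R e j) *m mxf (Df R e i).
Proof.
move=> [[se _] [_ DR]] [_ Hd]; rewrite !mxf_mul; apply: mxf_eq => u v /=.
have E : forall a b, \sum_w Df R e a u w * Df R e b w v =
    #|[set w | dist_is e a u w && dist_is e b v w]|%:R.
  move=> a b; rewrite -sum_card; apply: eq_bigr => w _.
  by rewrite /Df -natrM mulnb (dist_sym b w v).
rewrite !E; have [l _ Hl] := Hd u v.
have Hl' : dist_is e l v u by rewrite dist_sym.
rewrite (DR l i j u v v u Hl Hl'); congr (_%:R); apply: eq_card => w.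
by rewrite !inE andbC.
Qed.

Lemma alg_comm (R : numFieldType) n m (X Y : 'M[R]_(n, m)) (A B C : 'M[R]_m) (k : R) :
  Y^T *m X = C -> X^T *m Y = C -> Y^T *m Y = k%:M -> X^T *m X = k%:M ->
  A *m B = B *m A -> A *m C *m B = B *m C *m A ->
  (X *m A *m Y^T - Y *m A *m X^T) *m (X *m B *m Y^T - Y *m B *m X^T) =
  (X *m B *m Y^T - Y *m B *m X^T) *m (X *m A *m Y^T - Y *m A *m X^T).
Proof.
move=> H1 H2 H3 H4 AB ACB.
have key : forall A' B' : 'M[R]_m,
  (X *m A' *m Y^T - Y *m A' *m X^T) *m (X *m B' *m Y^T - Y *m B' *m X^T) =
  X *m (A' *m C *m B') *m Y^T - k *: (X *m (A' *m B') *m X^T)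
  - k *: (Y *m (A' *m B') *m Y^T) + Y *m (A' *m C *m B') *m X^T.
  move=> A' B'.
  have F : forall (P Q M : 'M[R]_(n, m)),
      P *m A' *m Q^T *m (M *m B' *m Y^T) = P *m (A' *m (Q^T *m M) *m B') *m Y^T.
    by move=> P Q M; rewrite !mulmxA.
  have G : forall (P Q M : 'M[R]_(n, m)),
      P *m A' *m Q^T *m (M *m B' *m X^T) = P *m (A' *m (Q^T *m M) *m B') *m X^T.
    by move=> P Q M; rewrite !mulmxA.
  rewrite mulmxBl !mulmxBr F G F G H1 H2 H3 H4 mul_mx_scalar.
  rewrite -!scalemxAl -!scalemxAr -!scalemxAl.
  by rewrite opprB addrA addrAC.
by rewrite !key AB ACB.
Qed.

Unset Implicit Arguments.

Theorem corollary4p4 (R : numFieldType) (T : finType) (e : rel T) (k d : nat) :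
  distance_regular e -> regular_graph e k -> diameter_is e d ->
  let S := fun i : nat =>
    skew_adjacency_mx R (distance_digraph (@line_digraph T e) i) in
  (exists c : 'I_(d.+2) -> R, (exists i, c i != 0) /\
     \sum_(i < d.+2) c i *: S (nat_of_ord i) = 0) /\
  (forall i j : nat, (i <= d.+1)%N -> (j <= d.+1)%N -> S i *m S j = S j *m S i).
Proof.
move=> DR rg diam S.
have [sg _] := DR.
have [se ie] := sg.
have S0 : S 0%N = 0.
  by rewrite /S; apply/matrixP => p q; rewrite !mxE /distance_digraph !dist0 eq_sym subrr.
have Ssucc : forall i, S i.+1 =
    mxf (Hf R e) *m mxf (Df R e i) *m (mxf (Tf R e))^T -
    mxf (Tf R e) *m mxf (Df R e i) *m (mxf (Hf R e))^T.
  by move=> i; rewrite /S S_succ Pt_fact // -P_fact.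
split.
  exists (fun i : 'I_d.+2 => (i == ord0)%:R); split.
    by exists ord0; rewrite eqxx oner_neq0.
  rewrite big_ord_recl /= S0 scaler0 add0r big1 // => i _.
  by rewrite scale0r.
move=> [|i] [|j] _ _; rewrite ?S0 ?mul0mx ?mulmx0 // !Ssucc.
apply: (alg_comm (C := mxf (Df R e 1)) (k := k%:R)).
- exact: TH.
- exact: HT.
- exact: TT.
- exact: HH.
- exact: Dcomm DR diam.
- have DC : forall a b, mxf (Df R e a) *m mxf (Df R e b) = mxf (Df R e b) *m mxf (Df R e a).
    by move=> a b; exact: Dcomm DR diam.
  by rewrite (DC i 1%N) -!mulmxA (DC i j) !mulmxA (DC j 1%N).
Qed.
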